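(* Let $K$ be a binomial principal ideal domain and $G$ a finitely generated regular nilpotent $K$-group. Then $G\cong H\times G_0$ for any addition $G_0$ and any foundation $H$ (not necessarily associated with each other); consequently all foundations of $G$ are isomorphic to each other and all additions of $G$ are isomorphic to each other.
   Context: $K$ binomial: a characteristic-zero domain with unique binomial coefficients $\binom{k}{n}\in K$; $K$-groups are Hall's nilpotent groups with exponents in $K$. $Is(N)=\{x\in G: x^\alpha\in N\text{ for some }0\ne\alpha\in K\}$; $I(G)=Is(G')\cap Z(G)$. An addition is a $K$-subgroup $G_0\le Z(G)$ with $Z(G)=G_0\oplus I(G)$. $G$ is regular if $G=H\times G_0$ for an addition $G_0$ and a $K$-subgroup $H$ with $Is(H')\ge Z(H)$; for a regular group, such a subgroup $H$ (identified with $G/G_0$) is also called a foundation. *)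

(* Defs.v *)
From Stdlib Require List.
From HB Require Import structures.
From mathcomp Require Import all_boot all_order all_algebra.
Set Implicit Arguments. Unset Strict Implicit. Unset Printing Implicit Defensive.
Import GRing.Theory.
Local Open Scope ring_scope.

Definition char_zero (K : idomainType) : Prop :=
  forall n : nat, (0 < n)%N -> (n%:R : K) != 0.

Definition binomial_coeffs (K : idomainType) (bin : K -> nat -> K) : Prop :=
  forall (a : K) (n : nat), (n`!)%:R * bin a n = \prod_(i < n) (a - i%:R).

Definition ideal (K : idomainType) (I : K -> Prop) : Prop :=
  I 0 /\ (forall x y, I x -> I y -> I (x + y)) /\ (forall r x, I x -> I (r * x)).

Definition principal_ideal_domain (K : idomainType) : Prop :=
  forall I : K -> Prop, ideal I -> exists a : K, forall x, I x <-> exists r, x = r * a.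

Definition rprod {T : Type} (mul : T -> T -> T) (one : T) (s : seq T) : T :=
  foldr mul one s.

Fixpoint rnpow {T : Type} (mul : T -> T -> T) (one : T) (x : T) (n : nat) : T :=
  match n with 0%N => one | n'.+1 => mul x (rnpow mul one x n') end.

Definition rcomm {T : Type} (mul : T -> T -> T) (inv : T -> T) (x y : T) : T :=
  mul (inv x) (mul (inv y) (mul x y)).

Inductive rgen {T : Type} (mul : T -> T -> T) (inv : T -> T) (one : T)
    (S : T -> Prop) : T -> Prop :=
  | rgen_in x : S x -> rgen mul inv one S x
  | rgen_one : rgen mul inv one S one
  | rgen_mul x y : rgen mul inv one S x -> rgen mul inv one S y -> rgen mul inv one S (mul x y)
  | rgen_inv x : rgen mul inv one S x -> rgen mul inv one S (inv x).

(* lower central series: rlcs i = gamma_{i+1} *)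
Fixpoint rlcs {T : Type} (mul : T -> T -> T) (inv : T -> T) (one : T) (i : nat) : T -> Prop :=
  match i with
  | 0%N => fun _ => True
  | i'.+1 => rgen mul inv one
               (fun z => exists x y, rlcs mul inv one i' x /\ z = rcomm mul inv x y)
  end.

Definition rnil_class {T : Type} (mul : T -> T -> T) (inv : T -> T) (one : T) (c : nat) : Prop :=
  forall x, rlcs mul inv one c x -> x = one.

(* Hall-Petresco words: rtaus xs m = [:: tau_1; ...; tau_m], determined by
   x_1^m ... x_n^m = tau_1^C(m,1) tau_2^C(m,2) ... tau_m^C(m,m). *)
Fixpoint rtaus {T : Type} (mul : T -> T -> T) (inv : T -> T) (one : T)
    (xs : seq T) (m : nat) : seq T :=
  match m with
  | 0%N => [::]
  | m'.+1 =>
      let ts := rtaus mul inv one xs m' in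
      rcons ts
        (mul (inv (rprod mul one [seq rnpow mul one (nth one ts i) 'C(m, i.+1) | i <- iota 0 m']))
             (rprod mul one [seq rnpow mul one x m | x <- xs]))
  end.

Record KGroup (K : idomainType) (bin : K -> nat -> K) := KGroupPack {
  kcar :> Type;
  kmul : kcar -> kcar -> kcar;
  kinv : kcar -> kcar;
  kone : kcar;
  kpow : kcar -> K -> kcar;
  kmulA : forall x y z, kmul x (kmul y z) = kmul (kmul x y) z;
  kmul1g : forall x, kmul kone x = x;
  kmulVg : forall x, kmul (kinv x) x = kone;
  kpow1 : forall x, kpow x 1 = x;
  kpowD : forall x a b, kpow x (a + b) = kmul (kpow x a) (kpow x b);
  kpowM : forall x a b, kpow (kpow x a) b = kpow x (a * b);
  kpowJ : forall x y a,
      kpow (kmul (kinv y) (kmul x y)) a = kmul (kinv y) (kmul (kpow x a) y);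
  knil : exists c : nat, rnil_class kmul kinv kone c /\
      forall (xs : seq kcar) (a : K),
        rprod kmul kone [seq kpow x a | x <- xs]
        = rprod kmul kone [seq kpow (nth kone (rtaus kmul kinv kone xs c) i) (bin a i.+1)
                          | i <- iota 0 c]
}.

Arguments kmul {K bin} k.
Arguments kinv {K bin} k.
Arguments kone {K bin} k.
Arguments kpow {K bin} k.

Section KGroupNotions.
Variables (K : idomainType) (bin : K -> nat -> K) (G : KGroup bin).

Definition kcomm (x y : G) : G := rcomm (kmul G) (kinv G) x y.
Definition kconj (x y : G) : G := kmul G (kinv G y) (kmul G x y).

Inductive kgen (S : G -> Prop) : G -> Prop :=
  | kgen_in x : S x -> kgen S x
  | kgen_one : kgen S (kone G)
  | kgen_mul x y : kgen S x -> kgen S y -> kgen S (kmul G x y)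
  | kgen_inv x : kgen S x -> kgen S (kinv G x)
  | kgen_pow x a : kgen S x -> kgen S (kpow G x a).

Definition ksub (S : G -> Prop) : Prop :=
  S (kone G) /\ (forall x y, S x -> S y -> S (kmul G x y)) /\
  (forall x, S x -> S (kinv G x)) /\ (forall x a, S x -> S (kpow G x a)).

Definition knormal (S : G -> Prop) : Prop := forall x y, S x -> S (kconj x y).

Definition kcentre_of (H : G -> Prop) (x : G) : Prop :=
  H x /\ forall y, H y -> kmul G x y = kmul G y x.
Definition kcentre : G -> Prop := kcentre_of (fun _ => True).

Definition kderived (H : G -> Prop) : G -> Prop :=
  kgen (fun z => exists x y, H x /\ H y /\ z = kcomm x y).

Definition isol (N : G -> Prop) (x : G) : Prop := exists a : K, a != 0 /\ N (kpow G x a).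

Definition Iset (x : G) : Prop := isol (kderived (fun _ => True)) x /\ kcentre x.

Definition addition (G0 : G -> Prop) : Prop :=
  ksub G0 /\ (forall x, G0 x -> kcentre x) /\
  (forall z, kcentre z <-> exists a b, G0 a /\ Iset b /\ z = kmul G a b) /\
  (forall x, G0 x -> Iset x -> x = kone G).

Definition kdprod (H G0 : G -> Prop) : Prop :=
  ksub H /\ ksub G0 /\ knormal H /\ knormal G0 /\
  (forall x, H x -> G0 x -> x = kone G) /\
  (forall g, exists h z, H h /\ G0 z /\ g = kmul G h z).

Definition foundation_cond (H : G -> Prop) : Prop :=
  forall x, kcentre_of H x -> isol (kderived H) x.

Definition regular : Prop :=
  exists H G0, addition G0 /\ kdprod H G0 /\ foundation_cond H.

Definition foundation (H : G -> Prop) : Prop :=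
  exists G0, addition G0 /\ kdprod H G0 /\ foundation_cond H.

Definition fin_gen : Prop :=
  exists s : seq G, forall x, kgen (fun y => List.In y s) x.

Definition kiso_sub (A B : G -> Prop) : Prop :=
  exists f : G -> G,
    (forall x, A x -> B (f x)) /\
    (forall x y, A x -> A y -> f (kmul G x y) = kmul G (f x) (f y)) /\
    (forall x a, A x -> f (kpow G x a) = kpow G (f x) a) /\
    (forall x y, A x -> A y -> f x = f y -> x = y) /\
    (forall y, B y -> exists x, A x /\ f x = y).

(* G is K-isomorphic to the external direct product H x G0 of K-subgroups:
   an isomorphism g |-> (h g, z g) *)
Definition kiso_prod (H G0 : G -> Prop) : Prop :=
  exists h z : G -> G,
    (forall x, H (h x)) /\ (forall x, G0 (z x)) /\
    (forall x y, h (kmul G x y) = kmul G (h x) (h y)) /\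
    (forall x y, z (kmul G x y) = kmul G (z x) (z y)) /\
    (forall x a, h (kpow G x a) = kpow G (h x) a) /\
    (forall x a, z (kpow G x a) = kpow G (z x) a) /\
    (forall x y, h x = h y -> z x = z y -> x = y) /\
    (forall a b, H a -> G0 b -> exists x, h x = a /\ z x = b).

End KGroupNotions.

(* Main.v *)
Require Import Defs.
From HB Require Import structures.
From mathcomp Require Import all_boot all_order all_algebra.
From Stdlib Require Import ClassicalEpsilon.
Local Open Scope ring_scope.
Import GRing.Theory.

Section Basics.
Variables (K : idomainType) (bin : K -> nat -> K) (G : KGroup bin).
Local Notation mul := (kmul G).
Local Notation inv := (kinv G).
Local Notation one := (kone G).
Local Notation pw := (kpow G).

Lemma mulVr (x : G) : mul x (inv x) = one.
Proof.
rewrite -{1}(kmul1g (mul x (inv x))) -{1}(kmulVg (inv x)).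
by rewrite -kmulA (kmulA (inv x)) kmulVg kmul1g kmulVg.
Qed.

Lemma mulg1 (x : G) : mul x one = x.
Proof. by rewrite -(kmulVg x) kmulA mulVr kmul1g. Qed.

Lemma mulKg (x y : G) : mul (inv x) (mul x y) = y.
Proof. by rewrite kmulA kmulVg kmul1g. Qed.

Lemma mulKVg (x y : G) : mul x (mul (inv x) y) = y.
Proof. by rewrite kmulA mulVr kmul1g. Qed.

Lemma mulgK (x y : G) : mul (mul y x) (inv x) = y.
Proof. by rewrite -kmulA mulVr mulg1. Qed.

Lemma mulgI (x y z : G) : mul x y = mul x z -> y = z.
Proof. by move=> h; rewrite -(mulKg x y) h mulKg. Qed.

Lemma inv1 : inv one = one :> G.
Proof. by rewrite -{2}(mulVr one) kmul1g. Qed.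

Lemma pw0 (x : G) : pw x 0 = one.
Proof.
have h := kpowD x 0 0; rewrite addr0 in h.
by apply: (@mulgI (pw x 0)); rewrite mulg1 -h.
Qed.

Lemma pwN1 (x : G) : pw x (-1) = inv x.
Proof.
have h := kpowD x 1 (-1); rewrite subrr pw0 kpow1 in h.
by rewrite -(mulKg x (pw x (-1))) -h mulg1.
Qed.

Lemma pw_one (a : K) : pw one a = one.
Proof. by rewrite -{1}(pw0 one) kpowM mul0r pw0. Qed.

Lemma pwV (x : G) a : pw (inv x) a = inv (pw x a).
Proof. by rewrite -pwN1 kpowM -pwN1 kpowM mulrC. Qed.

Definition central (x : G) := forall y, mul x y = mul y x.

Lemma centralV x : central x -> central (inv x).
Proof.
move=> hx y; apply: (@mulgI x); by rewrite mulKVg kmulA hx mulgK.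
Qed.

Lemma centralM x y : central x -> central y -> central (mul x y).
Proof. by move=> hx hy z; rewrite -kmulA hy kmulA hx kmulA. Qed.

Lemma rnpow_one n : rnpow mul one one n = one.
Proof. by elim: n => //= n ->; rewrite mulg1. Qed.

Lemma rnpow_commL (x y : G) n : mul x y = mul y x ->
  mul y (rnpow mul one x n) = mul (rnpow mul one x n) y.
Proof.
move=> h; elim: n => [|n IH] /=; first by rewrite mulg1 kmul1g.
by rewrite kmulA -h -kmulA IH kmulA.
Qed.

Lemma rnpow_comm (x y : G) n : mul x y = mul y x ->
  rnpow mul one (mul x y) n = mul (rnpow mul one x n) (rnpow mul one y n).
Proof.
move=> h; elim: n => [|n IH] /=; first by rewrite mulg1.
rewrite IH -kmulA (kmulA y) (rnpow_commL x y n h) -!kmulA.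
by [].
Qed.

Lemma rtaus_S xs m : rtaus mul inv one xs m.+1 =
  rcons (rtaus mul inv one xs m)
   (mul (inv (rprod mul one [seq rnpow mul one (nth one (rtaus mul inv one xs m) i) 'C(m.+1, i.+1)
              | i <- iota 0 m]))
        (rprod mul one [seq rnpow mul one x m.+1 | x <- xs])).
Proof. by []. Qed.

Lemma rprod_ones1 (t : G) m (f : nat -> nat) s : all (fun i => 0 < i)%N s ->
  rprod mul one [seq rnpow mul one (nth one (t :: nseq m one) i) (f i) | i <- s] = one.
Proof.
elim: s => //= i s IH /andP [hi hs]; case: i hi => // i _ /=.
by rewrite nth_nseq if_same rnpow_one kmul1g IH.
Qed.

Lemma rprod_ones2 (t : G) m (f : nat -> K) s : all (fun i => 0 < i)%N s ->
  rprod mul one [seq pw (nth one (t :: nseq m one) i) (f i) | i <- s] = one.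
Proof.
elim: s => //= i s IH /andP [hi hs]; case: i hi => // i _ /=.
by rewrite nth_nseq if_same pw_one kmul1g IH.
Qed.

Lemma all_iota_pos k n : all (fun i => 0 < i)%N (iota k.+1 n).
Proof. by elim: n k => //= n IH k; rewrite IH. Qed.

Lemma rcons_nseq' (m : nat) (x : G) : rcons (nseq m x) x = nseq m.+1 x.
Proof. by elim: m => //= m ->. Qed.

Lemma rtaus_comm (x y : G) m : mul x y = mul y x ->
  rtaus mul inv one [:: x; y] m.+1 = mul x y :: nseq m one.
Proof.
move=> h; elim: m => [|m IH].
  by rewrite rtaus_S /= inv1 kmul1g !mulg1.
rewrite rtaus_S IH.
have -> : iota 0 m.+1 = 0%N :: iota 1 m by [].
rewrite map_cons /= rprod_ones1 ?all_iota_pos // bin1 mulg1.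
rewrite !mulg1 (rnpow_comm x y m.+2 h) /= kmulVg.
by rewrite -[one :: nseq m one]/(nseq m.+1 one) -rcons_nseq'.
Qed.

Hypothesis hbin : binomial_coeffs bin.

Lemma bin_1 a : bin a 1 = a.
Proof.
have := hbin a 1; rewrite big_ord1 /= subr0.
by have -> : (1`!)%:R = 1 :> K by []; rewrite mul1r.
Qed.

Lemma pw_commM (x y : G) a : mul x y = mul y x ->
  pw (mul x y) a = mul (pw x a) (pw y a).
Proof.
move=> h; case: (knil G) => c [hnil hall].
case: c hnil hall => [|c] hnil hall.
  by rewrite (hnil (pw _ _) I) (hnil (mul _ _) I).
have := hall [:: x; y] a; rewrite rtaus_comm //.
have -> : iota 0 c.+1 = 0%N :: iota 1 c by [].
rewrite map_cons /= rprod_ones2 ?all_iota_pos // mulg1 bin_1.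
by rewrite mulg1 => ->.
Qed.


Set Implicit Arguments. Unset Strict Implicit.
Local Notation decomp P Q :=
  (ksub P /\ ksub Q /\ (forall p q, P p -> Q q -> mul p q = mul q p) /\
  (forall x, P x -> Q x -> x = one) /\
  (forall g, exists p q, P p /\ Q q /\ g = mul p q)).

Lemma decomp_swap P Q : decomp P Q -> decomp Q P.
Proof.
move=> [hP [hQ [hc [hi hg]]]].
split; first exact hQ.
split; first exact hP.
split; first by move=> p q hp hq; rewrite (hc q p hq hp).
split; first by move=> x hx hy; apply: hi.
move=> g; case: (hg g) => p [q [hp [hq ->]]].
by exists q, p; rewrite (hc p q hp hq).
Qed.

Lemma decomp_uniq P Q p q p' q' : decomp P Q -> P p -> Q q -> P p' -> Q q' ->
  mul p q = mul p' q' -> p = p' /\ q = q'.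
Proof.
move=> [[_ [hPm [hPi _]]] [[_ [hQm [hQi _]]] [hc [hi hg]]]] hp hq hp' hq' e.
have e2 : mul (inv p') p = mul q' (inv q).
  have e3 : mul (mul (inv p') p) q = q' by rewrite -kmulA e mulKg.
  by rewrite -e3 mulgK.
have e1 : mul (inv p') p = one by apply: hi; [apply: hPm => //; apply: hPi | rewrite e2; apply: hQm => //; apply: hQi].
split; first by rewrite -(mulKVg p' p) e1 mulg1.
by have := e1; rewrite e2 => e3; rewrite -(kmul1g q) -{1}e3 -kmulA kmulVg mulg1.
Qed.

Lemma decomp_proj P Q : decomp P Q -> exists pp pq : G -> G,
  (forall g, P (pp g)) /\ (forall g, Q (pq g)) /\ (forall g, g = mul (pp g) (pq g)).
Proof.
move=> [_ [_ [_ [_ hg]]]].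
have hg' : forall g, exists r : G * G, P r.1 /\ Q r.2 /\ g = mul r.1 r.2.
  by move=> g; case: (hg g) => p [q [? [? ?]]]; exists (p, q).
exists (fun g => (proj1_sig (constructive_indefinite_description _ (hg' g))).1).
exists (fun g => (proj1_sig (constructive_indefinite_description _ (hg' g))).2).
split; last split.
- by move=> g; case: (constructive_indefinite_description _ (hg' g)) => r [].
- by move=> g; case: (constructive_indefinite_description _ (hg' g)) => r [? []].
- by move=> g; case: (constructive_indefinite_description _ (hg' g)) => r [? []].
Qed.

Section Proj.
Variables (P Q : G -> Prop) (hd : decomp P Q) (pp pq : G -> G).
Hypotheses (hpp : forall g, P (pp g)) (hpq : forall g, Q (pq g))
  (hppq : forall g, g = mul (pp g) (pq g)).

Lemma proj_id a b : P a -> Q b -> pp (mul a b) = a /\ pq (mul a b) = b.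
Proof.
move=> ha hb; have := hppq (mul a b) => e.
by case: (decomp_uniq hd (hpp _) (hpq _) ha hb (esym e)).
Qed.

Lemma proj_mul x y : pp (mul x y) = mul (pp x) (pp y) /\ pq (mul x y) = mul (pq x) (pq y).
Proof.
have := hd; case=> [[_ [hPm _]] [[_ [hQm _]] [hc _]]].
have -> : mul x y = mul (mul (pp x) (pp y)) (mul (pq x) (pq y)).
  rewrite {1}(hppq x) {1}(hppq y) -!kmulA; congr (mul _ _).
  by rewrite !kmulA (hc _ _ (hpp y) (hpq x)).
by apply: proj_id; [apply: hPm | apply: hQm].
Qed.

Lemma proj_pow x a : pp (pw x a) = pw (pp x) a /\ pq (pw x a) = pw (pq x) a.
Proof.
have := hd; case=> [[_ [_ [_ hPp]]] [[_ [_ [_ hQp]]] [hc _]]].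
have -> : pw x a = mul (pw (pp x) a) (pw (pq x) a).
  by rewrite {1}(hppq x) pw_commM //; apply: hc.
by apply: proj_id; [apply: hPp | apply: hQp].
Qed.

Lemma proj_prod : kiso_prod P Q.
Proof.
exists pp, pq; do 2 split => //.
split; first by move=> x y; case: (proj_mul x y).
split; first by move=> x y; case: (proj_mul x y).
split; first by move=> x a; case: (proj_pow x a).
split; first by move=> x a; case: (proj_pow x a).
split; first by move=> x y e1 e2; rewrite (hppq x) (hppq y) e1 e2.
by move=> a b ha hb; exists (mul a b); apply: proj_id.
Qed.

End Proj.

Lemma decomp_prod P Q : decomp P Q -> kiso_prod P Q.
Proof.
move=> hd; case: (decomp_proj hd) => pp [pq [h1 [h2 h3]]].
exact: (proj_prod hd h1 h2 h3).
Qed.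

Lemma decomp_iso P Q R : decomp P Q -> decomp R Q -> kiso_sub R P.
Proof.
move=> hd hd'; case: (decomp_proj hd) => pp [pq [h1 [h2 h3]]].
have hd0 := hd; case: hd0 => [hP [[_ [hQm [hQi _]]] _]].
have hd1 := hd'; case: hd1 => [[_ [hRm [hRi _]]] [_ [_ [hRQ hRg]]]].
exists pp; split; first by [].
split; first by move=> x y _ _; case: (proj_mul hd h1 h2 h3 x y).
split; first by move=> x a _; case: (proj_pow hd h1 h2 h3 x a).
split.
  move=> x y hx hy e.
  set w := mul (inv (pq x)) (pq y).
  have ey : y = mul x w.
    by rewrite /w {1}(h3 x) -kmulA mulKVg e -h3.
  have hw : w = one.
    apply: hRQ; last by apply: hQm; [apply: hQi|].
    have -> : w = mul (inv x) y by rewrite ey mulKg.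
    by apply: hRm => //; apply: hRi.
  by rewrite ey hw mulg1.
move=> y hy; case: (hRg y) => r [q [hr [hq ey]]].
exists r; split => //.
have -> : r = mul y (inv q) by rewrite ey mulgK.
by case: (proj_id hd h1 h2 h3 hy (hQi _ hq)).
Qed.

Lemma kderived_mono (H : G -> Prop) x : kderived H x -> kderived (fun _ => True) x.
Proof.
elim=> [z [a [b [_ [_ ->]]]]| |a b _ ha _ hb|a _ ha|a c _ ha].
- by apply: kgen_in; exists a, b.
- exact: kgen_one.
- exact: kgen_mul.
- exact: kgen_inv.
- exact: kgen_pow.
Qed.

Lemma kcentre_central x : kcentre x <-> central x.
Proof.
split; first by move=> [_ h] y; apply: h.
by move=> h; split => // y _; apply: h.
Qed.

Lemma Iset_found (H G1 : G -> Prop) : addition G1 -> kdprod H G1 ->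
  foundation_cond H -> forall b, Iset b -> H b.
Proof.
move=> [_ [hG1c [_ hG1I]]] [hH [_ [_ [_ [_ hgen]]]]] hfc b [[be [be0 hbe]] hbc].
case: (hgen b) => h [z [hh [hz eb]]].
have zc : central z by apply/kcentre_central/hG1c.
have bc : central b by apply/kcentre_central.
have eh : h = mul b (inv z) by rewrite eb mulgK.
have hc : central h by rewrite eh; apply: centralM => //; apply: centralV.
have ez : z = mul (inv h) b by rewrite eb mulKg.
have [al [al0 hal]] : isol (kderived H) h.
  by apply: hfc; split => // y _; apply: hc.
have hal' := kderived_mono hal.
have zI : Iset z.
  split; last by apply/kcentre_central.
  exists (al * be); split; first by rewrite mulf_neq0.
  rewrite ez pw_commM; last by apply: centralV.
  rewrite pwV -kpowM mulrC -kpowM.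
  by apply: kgen_mul; [apply: kgen_inv; apply: kgen_pow | apply: kgen_pow].
by rewrite eb (hG1I z hz zI) mulg1.
Qed.

Lemma core (G0 H : G -> Prop) : addition G0 -> foundation H -> decomp H G0.
Proof.
move=> hadd [G1 [hadd1 [hdp hfc]]].
have hIH := Iset_found hadd1 hdp hfc.
case: hadd => [hG0 [hG0c [hZ hG0I]]].
have hdp' := hdp; case: hdp' => [hH [_ [_ [_ [_ hgen]]]]].
case: hadd1 => [_ [hG1c _]].
split; first done; split; first done.
split.
  by move=> p q _ hq; have [_ hc] := hG0c q hq; rewrite hc.
split.
  move=> x hx hx0; apply: hG0I => //; split; last by apply: hG0c.
  have [al [al0 hal]] : isol (kderived H) x.
    apply: hfc; split => // y _; have [_ hc] := hG0c x hx0; exact: hc.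
  by exists al; split => //; apply: kderived_mono hal.
move=> g; case: (hgen g) => h [z [hh [hz eg]]].
case: ((hZ z).1 (hG1c z hz)) => a [b [ha [hb ez]]].
exists (mul h b), a; split; first by case: hH => [_ [hm _]]; apply: hm => //; apply: hIH.
split => //.
have [_ ac] := hG0c a ha.
by rewrite eg ez -!kmulA ac.
Qed.

End Basics.

Theorem mainTheorem10 (K : idomainType) (bin : K -> nat -> K)
    (hchar : char_zero K) (hbin : binomial_coeffs bin)
    (hpid : principal_ideal_domain K)
    (G : KGroup bin) (hfg : fin_gen G) (hreg : regular G) :
  (forall (G0 H : G -> Prop), addition G0 -> foundation H -> kiso_prod H G0) /\
  (forall (H1 H2 : G -> Prop), foundation H1 -> foundation H2 -> kiso_sub H1 H2) /\
  (forall (A1 A2 : G -> Prop), addition A1 -> addition A2 -> kiso_sub A1 A2).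
Proof.
split.
  by move=> G0 H ha hf; apply: (decomp_prod hbin); apply: core.
split.
  move=> H1 H2 f1 f2; have f1' := f1; case: f1' => [G1 [ha1 _]].
  by apply: (decomp_iso hbin (core hbin ha1 f2) (core hbin ha1 f1)).
move=> A1 A2 h1 h2; case: hreg => H [G0 [ha [hdp hfc]]].
have fH : foundation H by exists G0.
apply: (decomp_iso hbin (decomp_swap (core hbin h2 fH))).
exact: decomp_swap (core hbin h1 fH).
Qed.
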